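(* Let $k,m>1$ be integers and $g\in S_{km}$ acting on $\{1,\dots,km\}$. Then $g$ preserves some partition of $\{1,\dots,km\}$ into $k$ blocks each of size $m$ (equivalently, $g$ lies in an imprimitive permutation group with $k$ blocks of size $m$) if and only if the cycle partition of $g$ (the multiset of its cycle lengths, fixed points counted as cycles of length $1$) is an i-partition of type $(k,m)$.
   Context: Let $k,m$ be positive integers. If $(m_1,\dots,m_l)$ is a partition of $m$, then the partition $(km_1,\dots,km_l)$ of $km$ is called an ic-partition of type $(k,m)$. For a partition $P$, a clustering of $P$ is a partition of the multiset of parts of $P$ into sub-multisets $P_1,\dots,P_r$ (called clusters), each regarded as a partition of the sum of its elements. A partition of $km$ is an i-partition of type $(k,m)$ if it has a clustering $P_1,\dots,P_r$ and there is a partition $(k_1,\dots,k_r)$ of $k$ such that, for each $i$, $P_i$ is an ic-partition (of $k_im$) of type $(k_i,m)$. *)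

(* Defs.v *)
From mathcomp Require Import all_boot fingroup perm.
Set Implicit Arguments. Unset Strict Implicit. Unset Printing Implicit Defensive.

Definition is_partition (s : seq nat) (n : nat) : bool :=
  all (fun x => 0 < x) s && (sumn s == n).

Definition ic_partition (p : seq nat) (k m : nat) : Prop :=
  exists mu : seq nat, is_partition mu m /\ perm_eq p (map (muln k) mu).

Definition i_partition (p : seq nat) (k m : nat) : Prop :=
  is_partition p (k * m) /\
  exists (cl : seq (seq nat)) (ks : seq nat),
    [/\ perm_eq (flatten cl) p, is_partition ks k, size ks = size cl &
        forall i, i < size cl -> ic_partition (nth [::] cl i) (nth 0 ks i) m].

Definition cycle_type (T : finType) (g : {perm T}) : seq nat :=
  [seq #|C| | C : {set T} <- enum (porbits g)].

Definition preserves_block_system (T : finType) (g : {perm T}) (k m : nat) : Prop :=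
  exists P : {set {set T}},
    [/\ partition P [set: T], #|P| = k,
        {in P, forall B : {set T}, #|B| = m} &
        {in P, forall B : {set T}, g @: B \in P}].

(* Main.v *)
Require Import Defs.
From mathcomp Require Import all_boot fingroup perm.
Set Implicit Arguments. Unset Strict Implicit. Unset Printing Implicit Defensive.

Lemma sum_cardI (T : finType) (O : {set {set T}}) (A : {set T}) :
  trivIset O -> A \subset cover O -> \sum_(B in O) #|A :&: B| = #|A|.
Proof.
move=> tO sAO.
have ->: \sum_(B in O) #|A :&: B| = \sum_(B in O) \sum_(x in A) (x \in B).
  apply: eq_bigr => B _; rewrite -sum1_card [RHS]big_mkcond [LHS]big_mkcond /=.
  by apply: eq_bigr => x _; rewrite inE; case: (x \in A); case: (x \in B).
rewrite exchange_big /= -sum1_card; apply: eq_bigr => x xA.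
have xc : x \in cover O by apply: (subsetP sAO).
rewrite (bigD1 (pblock O x)) ?pblock_mem //= mem_pblock xc big1 // => B /andP[BO nB].
suff: x \notin B by case: (x \in B).
apply: contra nB => xB; apply/eqP; symmetry; exact: def_pblock.
Qed.

Section Orb.
Variable T : finType.
Variable g : {perm T}.

Lemma porbit_eq x y : y \in porbit g x -> porbit g y = porbit g x.
Proof. by move=> h; apply/eqP; rewrite eq_porbit_mem. Qed.

Lemma porbits_triv : trivIset (porbits g).
Proof.
apply/trivIsetP => A B /imsetP[x _ ->] /imsetP[y _ ->] ne.
apply/pred0P => z /=; apply/negbTE/andP => [][zx zy]; move/eqP: ne; apply.
by rewrite -(porbit_eq zx) (porbit_eq zy).
Qed.

Lemma porbits_cover : cover (porbits g) = [set: T].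
Proof.
apply/setP => x; rewrite inE; apply/bigcupP; exists (porbit g x); last exact: porbit_id.
exact: imset_f.
Qed.

Lemma porbitsP C y : C \in porbits g -> y \in C -> C = porbit g y.
Proof. by case/imsetP => x _ -> yx; rewrite (porbit_eq yx). Qed.

Lemma porbit_iter i x : (g ^+ i)%g @: porbit g x = porbit g x.
Proof.
apply/eqP; rewrite eqEcard card_imset ?leqnn ?andbT; last exact: perm_inj.
apply/subsetP => _ /imsetP[y /porbitP[j ->] ->].
by rewrite -permM -expgD mem_porbit.
Qed.

Lemma porbits_iter i C : C \in porbits g -> (g ^+ i)%g @: C = C.
Proof. by case/imsetP => x _ ->; apply: porbit_iter. Qed.

End Orb.
Lemma perm_flatten_filter (X Y : eqType) (s : seq X) (ks : seq Y) (p : Y -> pred X) :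
  (forall x, x \in s -> count (p^~ x) ks = 1) ->
  perm_eq s (flatten [seq filter (p y) s | y <- ks]).
Proof.
move=> H; apply/seq.permP => a.
rewrite count_flatten -map_comp sumnE big_map -sum1_count.
have ->: \sum_(j <- ks) (count a \o filter (p j)) s =
         \sum_(j <- ks) \sum_(x <- s | a x) (p j x : nat).
  apply: eq_bigr => y _ /=; rewrite count_filter -sum1_count big_mkcond [RHS]big_mkcond /=.
  by apply: eq_bigr => x _; rewrite /predI /=; case: (a x); case: (p y x).
rewrite exchange_big /= big_seq_cond [RHS]big_seq_cond; apply: eq_bigr => x /andP[xs _].
by rewrite -(H x xs) -sum1_count big_mkcond.
Qed.

Section Forward.
Variable T : finType.
Variable g : {perm T}.
Variable P : {set {set T}}.
Hypothesis tP : trivIset P.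
Hypothesis cP : cover P = [set: T].
Hypothesis sP : {in P, forall B : {set T}, g @: B \in P}.

Definition gs : {perm {set T}} := perm (imset_inj (@perm_inj _ g)).

Lemma gsX i B : (gs ^+ i)%g B = (g ^+ i)%g @: B.
Proof.
elim: i => [|i IH].
  by rewrite !expg0 perm1 -[LHS]imset_id; apply: eq_imset => x; rewrite perm1.
rewrite !expgSr permM IH permE -imset_comp; apply: eq_imset => x /=.
by rewrite permM.
Qed.

Lemma gsP i B : B \in P -> (gs ^+ i)%g B \in P.
Proof.
move=> BP; elim: i => [|i IH]; first by rewrite expg0 perm1.
by rewrite expgSr permM permE; apply: sP.
Qed.

Lemma orb_sub B : B \in P -> porbit gs B \subset P.
Proof. by move=> BP; apply/subsetP => _ /porbitP[i ->]; apply: gsP. Qed.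

Definition Os := [set porbit gs B | B in P].

Lemma Os_sub O : O \in Os -> O \subset P.
Proof. by case/imsetP => B BP ->; apply: orb_sub. Qed.

Lemma Os_triv : trivIset Os.
Proof.
apply: trivIsetS (porbits_triv gs); apply/subsetP => _ /imsetP[B _ ->].
exact: imset_f.
Qed.

Lemma Os_eq O B : O \in Os -> B \in O -> O = porbit gs B.
Proof. by case/imsetP => B0 _ -> h; rewrite (porbit_eq h). Qed.

Lemma cover_inv O x : O \in Os -> x \in cover O -> porbit g x \subset cover O.
Proof.
move=> OO /bigcupP[B BO xB]; rewrite (Os_eq OO BO).
apply/subsetP => _ /porbitP[i ->]; apply/bigcupP; exists ((gs ^+ i)%g B).
  exact: mem_porbit.
by rewrite gsX; apply: imset_f.
Qed.

Lemma keyK O C B : O \in Os -> C \in porbits g -> C \subset cover O -> B \in O ->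
  #|C| = #|O| * #|C :&: B|.
Proof.
move=> OO CC CO BO.
have tO : trivIset O := trivIsetS (Os_sub OO) tP.
rewrite -(sum_cardI tO CO) -sum_nat_const; apply: eq_bigr => B'.
rewrite (Os_eq OO BO) => /porbitP[i ->]; rewrite gsX.
rewrite -{1}(porbits_iter i CC) -imsetI; last by move=> x y _ _; apply: perm_inj.
by rewrite card_imset //; apply: perm_inj.
Qed.

End Forward.

Lemma ct_partition (T : finType) (g : {perm T}) : is_partition (cycle_type g) #|T|.
Proof.
apply/andP; split.
  apply/allP => n /mapP[C]; rewrite mem_enum => /imsetP[x _ ->] ->.
  by rewrite lt0n card_porbit_neq0.
apply/eqP; rewrite /cycle_type sumnE big_map big_enum /=.
rewrite -cardsT -(sum_cardI (porbits_triv g)) ?porbits_cover //.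
by apply: eq_bigr => C _; rewrite setTI.
Qed.

Section Forward2.
Variable T : finType.
Variable g : {perm T}.
Variables (k m : nat).
Variable P : {set {set T}}.
Hypothesis pP : partition P [set: T].
Hypothesis kP : #|P| = k.
Hypothesis mP : {in P, forall B : {set T}, #|B| = m}.
Hypothesis sP : {in P, forall B : {set T}, g @: B \in P}.

Let tP : trivIset P := partition_trivIset pP.
Let cP : cover P = [set: T] := cover_partition pP.

Let Cs (O : {set {set T}}) := filter (fun C : {set T} => C \subset cover O) (enum (porbits g)).
Let BO (O : {set {set T}}) := odflt set0 [pick B in O].

Lemma BO_in O : O \in Os g P -> BO O \in O.
Proof.
case/imsetP => B _ ->; rewrite /BO; case: pickP => [B' h|h] //=.
by have := h B; rewrite porbit_id.
Qed.

Lemma forward_ic O : O \in Os g P ->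
  ic_partition (map (fun C : {set T} => #|C|) (Cs O)) #|O| m.
Proof.
move=> OO; have BOO := BO_in OO.
have BP : BO O \in P by apply: (subsetP (Os_sub sP OO)).
exists (map (fun C : {set T} => #|C :&: BO O|) (Cs O)); split; last first.
  rewrite -map_comp; set f := (muln _ \o _).
  suff ->: map (fun C : {set T} => #|C|) (Cs O) = map f (Cs O) by [].
  apply/eq_in_map => C.
  rewrite mem_filter mem_enum => /andP[CO CC] /=.
  exact: (keyK tP sP OO CC CO BOO).
apply/andP; split.
  apply/allP => n /mapP[C]; rewrite mem_filter mem_enum => /andP[CO CC] ->.
  have := keyK tP sP OO CC CO BOO; case/imsetP: CC => x _ Cx.
  have := card_porbit_neq0 g x; rewrite -Cx => /negbTE h e.
  by rewrite lt0n; apply/negP => /eqP e2; rewrite e e2 muln0 in h.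
apply/eqP; rewrite sumnE big_map big_filter big_enum_cond /= -(mP BP).
rewrite -(sum_cardI (A := BO O) (porbits_triv g)) ?porbits_cover ?subsetT //.
rewrite big_mkcondr /=; apply: eq_bigr => C CC; case: ifP => nCO.
  by rewrite setIC.
move/negbT: nCO => nCO; apply/esym/eqP; rewrite cards_eq0; apply/eqP/setP => y.
rewrite !inE; apply/negP => /andP[yB yC]; move/negP: nCO; apply.
rewrite (porbitsP CC yC); apply: (cover_inv OO).
by apply/bigcupP; exists (BO O).
Qed.


Lemma forward_main : i_partition (cycle_type g) k m.
Proof.
split.
  have := card_uniform_partition mP pP; rewrite cardsT kP => <-.
  exact: ct_partition.
exists (map (fun O : {set {set T}} => map (fun C : {set T} => #|C|) (Cs O)) (enum (Os g P))).
exists (map (fun O : {set {set T}} => #|O|) (enum (Os g P))).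
split.
- rewrite (map_comp (map (fun C : {set T} => #|C|)) Cs) -map_flatten /cycle_type.
  apply: perm_map; rewrite perm_sym; apply: perm_flatten_filter => C.
  rewrite mem_enum => CC; have [x _ Cx] := imsetP CC.
  have xP : x \in cover P by rewrite cP inE.
  set O0 := porbit (gs g) (pblock P x).
  have O0O : O0 \in Os g P by apply: imset_f; apply: pblock_mem.
  transitivity (count (pred1 O0) (enum (Os g P))); last first.
    by rewrite count_uniq_mem ?enum_uniq // mem_enum O0O.
  apply: eq_in_count => O; rewrite mem_enum => OO /=; apply/idP/idP.
    move=> /subsetP /(_ x); rewrite Cx porbit_id => /(_ isT) /bigcupP[B BinO xB].
    have BP : B \in P by apply: (subsetP (Os_sub sP OO)).
    by rewrite (Os_eq OO BinO) -(def_pblock tP BP xB).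
  move/eqP => ->; rewrite Cx; apply: (cover_inv O0O).
  by apply/bigcupP; exists (pblock P x); [apply: porbit_id | rewrite mem_pblock].
- apply/andP; split.
    apply/allP => n /mapP[O]; rewrite mem_enum => /imsetP[B _ ->] ->.
    by rewrite lt0n card_porbit_neq0.
  apply/eqP; rewrite sumnE big_map big_enum /= -kP.
  rewrite -(sum_cardI (A := P) (Os_triv g P)).
    by apply: eq_bigr => O OO; rewrite (setIidPr (Os_sub sP OO)).
  apply/subsetP => B BP; apply/bigcupP; exists (porbit (gs g) B).
    exact: imset_f.
  exact: porbit_id.
- by rewrite !size_map.
- move=> i; rewrite size_map => lti.
  rewrite (nth_map set0) // (nth_map set0) //.
  by apply: forward_ic; rewrite -mem_enum mem_nth.
Qed.

End Forward2.

Lemma perm_map_exists (X Y : eqType) (f : X -> Y) (t : seq Y) (s : seq X) :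
  perm_eq t (map f s) -> exists2 s', perm_eq s' s & map f s' = t.
Proof.
elim: t s => [|y t IH] s h.
  by exists [::] => //; move: (perm_size h); case: s h => //.
have : y \in map f s by rewrite -(perm_mem h) mem_head.
case/mapP => x xs ey.
have hs := perm_to_rem xs.
have : perm_eq t (map f (rem x s)).
  by rewrite -(perm_cons y); apply: (perm_trans h); rewrite ey -/(map f (x :: _)) perm_map.
case/IH => s'' h1 h2; exists (x :: s''); last by rewrite /= h2 ey.
by rewrite perm_sym (perm_trans hs) // perm_cons perm_sym.
Qed.

Lemma map_index_iota (X : eqType) (t : seq X) (x : X) :
  uniq t -> map (index^~ t) t = iota 0 (size t).
Proof.
move=> ut; apply: (@eq_from_nth _ 0); first by rewrite size_map size_iota.
move=> i; rewrite size_map => lti.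
by rewrite (nth_map x) // index_uniq // nth_iota.
Qed.

Lemma count_mod_iota k a r : r < k ->
  count (fun i => i %% k == r) (iota 0 (k * a)) = a.
Proof.
move=> rk; elim: a => [|a IH]; first by rewrite muln0.
rewrite mulnS addnC iotaD count_cat IH add0n -addn1; congr (_ + _).
transitivity (count (pred1 r) (iota 0 k)); last by rewrite count_uniq_mem ?iota_uniq // mem_iota rk.
have -> : iota (k * a) k = map (addn (k * a)) (iota 0 k) by rewrite -iotaDl addn0.
rewrite count_map; apply: eq_in_count => i; rewrite mem_iota /= => lik.
by rewrite mulnC modnMDl modn_small.
Qed.

Section Idx.
Variable T : finType.
Variable g : {perm T}.

Definition rep y := odflt y [pick z in porbit g y].
Definition idx y := index y (traject g (rep y) #|porbit g y|).

Lemma rep_in y : rep y \in porbit g y.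
Proof. rewrite /rep; case: pickP => [z //|h]; by have := h y; rewrite porbit_id. Qed.

Lemma rep_eq y y' : porbit g y = porbit g y' -> rep y = rep y'.
Proof.
rewrite /rep => e; rewrite e; case: pickP => [z //|h]; by have := h y'; rewrite porbit_id.
Qed.

Lemma porbit_rep y : porbit g (rep y) = porbit g y.
Proof. exact: porbit_eq (rep_in y). Qed.

Lemma traj_mem y : y \in traject g (rep y) #|porbit g y|.
Proof.
by rewrite -porbit_rep -porbit_traject porbit_rep porbit_id.
Qed.

Lemma traj_uniq y : uniq (traject g (rep y) #|porbit g y|).
Proof. by rewrite -porbit_rep uniq_traject_porbit. Qed.

Lemma idx_lt y : idx y < #|porbit g y|.
Proof.
by rewrite /idx; have := traj_mem y; rewrite -index_mem size_traject.
Qed.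

Lemma idx_nth y : iter (idx y) g (rep y) = y.
Proof.
have := nth_index (rep y) (traj_mem y).
by rewrite nth_traject ?idx_lt.
Qed.

Lemma idx_iter y i : i < #|porbit g y| -> idx (iter i g (rep y)) = i.
Proof.
move=> lti; have ey : porbit g (iter i g (rep y)) = porbit g y.
  by rewrite -permX porbit_perm porbit_rep.
rewrite /idx ey (rep_eq ey) -(nth_traject g lti) index_uniq ?size_traject //.
exact: traj_uniq.
Qed.

Lemma iter_mod y i : iter i g (rep y) = iter (i %% #|porbit g y|) g (rep y).
Proof.
rewrite {1}(divn_eq i #|porbit g y|) addnC iterD; congr (iter _ _ _).
elim: (i %/ _) => [//|j IH]; rewrite mulSn iterD IH.
by have := iter_porbit g (rep y); rewrite porbit_rep.
Qed.

Lemma idx_g y : idx (g y) = (idx y).+1 %% #|porbit g y|.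
Proof.
have Ng : 0 < #|porbit g y| by rewrite lt0n card_porbit_neq0.
rewrite -{1}(idx_nth y) -iterS iter_mod idx_iter ?ltn_pmod //.
Qed.

Lemma porbit_g y : porbit g (g y) = porbit g y.
Proof. by have := porbit_perm g 1 y; rewrite expg1. Qed.

End Idx.

Lemma card_idx_mod (T : finType) (g : {perm T}) y k0 r : r < k0 ->
  k0 %| #|porbit g y| ->
  #|[set z in porbit g y | idx g z %% k0 == r]| = #|porbit g y| %/ k0.
Proof.
move=> rk dk.
set t := traject g (rep g y) #|porbit g y|.
have memt z : (z \in porbit g y) = (z \in t).
  by rewrite /t -porbit_rep -porbit_traject porbit_rep.
have ut : uniq t by apply: traj_uniq.
have idxt z : z \in t -> idx g z = index z t.
  rewrite -memt => zy; have e := porbit_eq zy.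
  by rewrite /idx e (rep_eq e).
transitivity (count (fun z => idx g z %% k0 == r) t).
  rewrite -size_filter -(card_uniqP (filter_uniq _ ut)); apply: eq_card => z.
  by rewrite inE mem_filter memt andbC.
rewrite (eq_in_count (a2 := fun z => index z t %% k0 == r)); last first.
  by move=> z zt /=; rewrite idxt.
rewrite -(count_map (index^~ t) (fun i => i %% k0 == r)) (map_index_iota y ut).
by rewrite size_traject -{1}(divnK dk) mulnC count_mod_iota.
Qed.

Definition Uo (T : finType) (g : {perm T}) (S : seq {set T}) := [set y | porbit g y \in S].

Section Cluster.
Variable T : finType.
Variable g : {perm T}.
Variable S : seq {set T}.
Variables k0 m : nat.
Hypothesis uS : uniq S.
Hypothesis oS : {subset S <= porbits g}.
Hypothesis k0pos : 0 < k0.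
Hypothesis mpos : 0 < m.
Hypothesis dS : forall C, C \in S -> k0 %| #|C|.
Hypothesis sS : \sum_(C <- S) #|C| %/ k0 = m.

Definition Bk r := [set y | (porbit g y \in S) && (idx g y %% k0 == r)].

Lemma Bk_card r : r < k0 -> #|Bk r| = m.
Proof.
move=> rk.
rewrite -(sum_cardI (A := Bk r) (porbits_triv g)) ?porbits_cover ?subsetT //.
rewrite -sS big_uniq // big_mkcond [RHS]big_mkcond /=; apply: eq_bigr => C _.
case CS: (C \in S).
  have CP := oS CS; rewrite CP; case/imsetP: CP => x _ Cx; subst C.
  rewrite -(@card_idx_mod T g x k0 r rk) ?dS //.
  apply: eq_card => z; rewrite !inE.
  case zC : (z \in porbit g x); rewrite ?andbF //= andbT.
  by rewrite (porbit_eq zC) CS.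
case: ifP => // CP; apply/eqP; rewrite cards_eq0; apply/eqP/setP => z.
rewrite !inE; apply/negP => /andP[/andP[zS _] zC].
by rewrite -(porbitsP CP zC) CS in zS.
Qed.

Lemma Bk_g r : r < k0 -> g @: Bk r = Bk (r.+1 %% k0).
Proof.
move=> rk; apply/eqP; rewrite eqEcard card_imset; last exact: perm_inj.
rewrite !Bk_card ?ltn_pmod // leqnn andbT.
apply/subsetP => z /imsetP[y]; rewrite inE => /andP[yS /eqP yr] ->.
rewrite inE porbit_g yS /= idx_g.
have dN : k0 %| #|porbit g y| by apply: dS.
by rewrite (modn_dvdm _ dN) -[(idx g y).+1]addn1 -modnDml yr addn1.
Qed.

Definition P1 := [set Bk (nat_of_ord r) | r in 'I_k0].

Lemma Bk_inj : injective (fun r : 'I_k0 => Bk r).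
Proof.
move=> r r' e.
have : 0 < #|Bk r| by rewrite Bk_card.
rewrite card_gt0 => /set0Pn[y yB]; move: (yB); rewrite e !inE => /andP[_ /eqP h2].
by move: yB; rewrite !inE => /andP[_ /eqP h1]; apply: val_inj; rewrite /= -h1 -h2.
Qed.

Lemma cluster_blocks : [/\ partition P1 (Uo g S), #|P1| = k0,
  {in P1, forall B : {set T}, #|B| = m} & {in P1, forall B : {set T}, g @: B \in P1}].
Proof.
split.
- apply/and3P; split.
  + apply/eqP/setP => y; rewrite inE; apply/bigcupP/idP.
      by case=> B /imsetP[r _ ->]; rewrite inE => /andP[].
    move=> yS; exists (Bk (Ordinal (ltn_pmod (idx g y) k0pos)));
      first by apply: imset_f.
    by rewrite inE yS /=.
  + apply/trivIsetP => B1 B2 /imsetP[r _ ->] /imsetP[r' _ ->] ne.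
    apply/pred0P => z /=; rewrite !inE; apply/negP => /andP[/andP[_ /eqP a] /andP[_ /eqP b]].
    by move/eqP: ne; apply; congr Bk; rewrite -a -b.
  + apply/imsetP => [][r _ e]; have := Bk_card (ltn_ord r).
    by rewrite -e cards0 => e2; move: mpos; rewrite -e2.
- by rewrite card_imset ?card_ord //; apply: Bk_inj.
- by move=> B /imsetP[r _ ->]; apply: Bk_card.
- move=> B /imsetP[r _ ->]; rewrite Bk_g //.
  by apply/imsetP; exists (Ordinal (ltn_pmod r.+1 k0pos)).
Qed.

End Cluster.

Lemma partitionU (T : finType) (P1 P2 : {set {set T}}) D1 D2 :
  partition P1 D1 -> partition P2 D2 -> [disjoint D1 & D2] ->
  partition (P1 :|: P2) (D1 :|: D2) /\ #|P1 :|: P2| = #|P1| + #|P2|.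
Proof.
move=> pP1 pP2 dD.
have c1 := cover_partition pP1; have c2 := cover_partition pP2.
split.
  apply/and3P; split.
  - by rewrite /cover bigcup_setU -/(cover P1) -/(cover P2) c1 c2.
  - by apply: trivIsetU; rewrite ?c1 ?c2 ?(partition_trivIset pP1) ?(partition_trivIset pP2).
  - by rewrite in_setU (partition0 pP1) (partition0 pP2).
rewrite cardsU; suff ->: P1 :&: P2 = set0 by rewrite cards0 subn0.
apply/setP => B; rewrite !inE; apply/negP => /andP[B1 B2].
have s1 := partitionS pP1 B1; have s2 := partitionS pP2 B2.
have := partition_neq0 pP1 B1; case/set0Pn => x xB.
move/pred0P: dD => /(_ x) /=; rewrite (subsetP s1 _ xB) (subsetP s2 _ xB).
by [].
Qed.

Section Back.
Variable T : finType.
Variable g : {perm T}.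
Variable m : nat.
Hypothesis mpos : 0 < m.

Lemma build (cl : seq (seq nat)) (ks : seq nat) (S : seq {set T}) :
  uniq S -> {subset S <= porbits g} -> map (fun C : {set T} => #|C|) S = flatten cl ->
  size ks = size cl -> all (fun x => 0 < x) ks ->
  (forall i, i < size cl -> ic_partition (nth [::] cl i) (nth 0 ks i) m) ->
  exists P : {set {set T}}, [/\ partition P (Uo g S), #|P| = sumn ks,
     {in P, forall B : {set T}, #|B| = m} & {in P, forall B : {set T}, g @: B \in P}].
Proof.
elim: cl ks S => [|c cl IH] [|k0 ks] S //=.
  move=> _ _ eS _ _ _; exists set0; split.
  - suff -> : Uo g S = set0 by rewrite partition_set0.
    by case: S eS => // _; apply/setP => y; rewrite !inE.
  - by rewrite cards0.
  - by move=> B; rewrite inE.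
  - by move=> B; rewrite inE.
move=> uS oS eS [sz] /andP[k0p pos] ic.
set S1 := take (size c) S; set S2 := drop (size c) S.
have eS12 : S = S1 ++ S2 by rewrite cat_take_drop.
have e1 : map (fun C : {set T} => #|C|) S1 = c by rewrite map_take eS take_size_cat.
have e2 : map (fun C : {set T} => #|C|) S2 = flatten cl by rewrite map_drop eS drop_size_cat.
have uS12 := uS; rewrite eS12 cat_uniq in uS12; case/and3P: uS12 => uS1 dS12 uS2.
have [P2 [pP2 cP2 mP2 sP2]] := IH ks S2 uS2 (fun C h => oS C (mem_drop h)) e2 sz pos
   (fun i h => ic i.+1 h).
have [mu [/andP[mupos /eqP smu] pmu]] := ic 0 (ltn0Sn _).
rewrite /= in pmu.
have dS : forall C, C \in S1 -> k0 %| #|C|.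
  move=> C CS; have : #|C| \in map (muln k0) mu.
    by rewrite -(perm_mem pmu) -e1; apply: map_f.
  by case/mapP => x _ ->; apply: dvdn_mulr.
have sS : \sum_(C <- S1) #|C| %/ k0 = m.
  rewrite -smu -(big_map (fun C : {set T} => #|C|) predT (divn^~ k0)) e1.
  rewrite (perm_big _ pmu) big_map sumnE; apply: eq_bigr => x _ /=.
  by rewrite mulKn.
have [pP1 cP1 mP1 sP1] := cluster_blocks uS1 (fun C h => oS C (mem_take h)) k0p mpos dS sS.
have dU : [disjoint Uo g S1 & Uo g S2].
  apply/pred0P => y /=; rewrite !inE; apply/negP => /andP[y1 y2].
  by move/hasP: dS12; apply; exists (porbit g y).
have [pP cP] := partitionU pP1 pP2 dU.
exists (P1 g S1 k0 :|: P2); split.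
- suff -> : Uo g S = Uo g S1 :|: Uo g S2 by [].
  by apply/setP => y; rewrite !inE eS12 mem_cat.
- by rewrite cP cP1 cP2.
- by move=> B /setUP[] h; [apply: mP1 | apply: mP2].
- by move=> B /setUP[] h; rewrite inE; [rewrite sP1 | rewrite sP2 ?orbT].
Qed.
End Back.

Theorem mainTheorem2 (k m : nat) (hk : 1 < k) (hm : 1 < m) (g : {perm 'I_(k * m)}) :
  preserves_block_system g k m <-> i_partition (cycle_type g) k m.
Proof.
split.
  by case=> P [pP kP mP sP]; apply: (forward_main pP kP mP sP).
case=> _ [cl [ks [pc /andP[pos /eqP sks] sz ic]]].
have [s' ps' es'] := @perm_map_exists _ _ (fun C : {set 'I_(k * m)} => #|C|)
   (flatten cl) (enum (porbits g)) pc.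
have us' : uniq s' by rewrite (perm_uniq ps') enum_uniq.
have os' : {subset s' <= porbits g} by move=> C; rewrite (perm_mem ps') mem_enum.
have mpos : 0 < m by apply: ltnW.
have [P [pP cP mP sP]] := build mpos us' os' es' sz pos ic.
exists P; split => //; last by rewrite cP sks.
suff <- : Uo g s' = [set: 'I_(k * m)] by [].
apply/setP => y; rewrite !inE (perm_mem ps') mem_enum; exact: imset_f.
Qed.
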